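(* Let $D$ be a division semialgebra over $\mathbb{Z}_\mathrm{max}$ with finite unit index. Then $D\cong F^{(n)}$ for some positive integer $n$.
   Context: A (possibly noncommutative) semiring has a commutative associative addition with identity $0$ and an associative multiplication with identity $1$, satisfying both distributive laws; a division semiring is one in which every nonzero element is invertible. $\mathbb{Z}_\mathrm{max}=\mathbb{Z}\cup\{-\infty\}$ is the semifield with addition $\max$ and multiplication ordinary addition; writing $u$ for the integer $1$ in it, $\mathbb{Z}_\mathrm{max}=\{0\}\cup\{u^k:k\in\mathbb{Z}\}$. A division semialgebra over a semifield $K$ is a division semiring $D$ with an injective homomorphism from $K$ into the center of $D$. The unit index is $\mathrm{ui}(D/K)=|D^\times/K^\times|$. For a positive integer $n$, $F^{(n)}$ is the semifield $\mathbb{Z}_\mathrm{max}$ regarded as a semialgebra over $\mathbb{Z}_\mathrm{max}$ via $u^k\mapsto u^{nk}$, $0\mapsto 0$; the isomorphism is one of semialgebras over $\mathbb{Z}_\mathrm{max}$. *)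

(* Defs.v *)
From Stdlib Require Import ZArith List.
Unset Implicit Arguments.

(* A (possibly noncommutative) semiring, exactly as in the paper:
   commutative associative addition with identity 0, associative
   multiplication with identity 1, both distributive laws.
   (No absorbing-zero axiom is imposed, since the paper does not.) *)
Record Semiring := {
  car :> Type;
  sadd : car -> car -> car;
  smul : car -> car -> car;
  szero : car;
  sone : car;
  sadd_comm : forall x y, sadd x y = sadd y x;
  sadd_assoc : forall x y z, sadd x (sadd y z) = sadd (sadd x y) z;
  sadd_0l : forall x, sadd szero x = x;
  smul_assoc : forall x y z, smul x (smul y z) = smul (smul x y) z;
  smul_1l : forall x, smul sone x = x;
  smul_1r : forall x, smul x sone = x;
  smul_addl : forall x y z, smul (sadd x y) z = sadd (smul x z) (smul y z);
  smul_addr : forall x y z, smul x (sadd y z) = sadd (smul x y) (smul x z)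
}.

Definition is_unit (D : Semiring) (x : D) : Prop :=
  exists y : D, smul D x y = sone D /\ smul D y x = sone D.

Definition division_semiring (D : Semiring) : Prop :=
  forall x : D, x <> szero D -> is_unit D x.

(* Z_max = Z ∪ {-oo}: None is -oo (the zero), Some k is u^k. *)
Definition Zmax := option Z.
Definition zmax_add (a b : Zmax) : Zmax :=
  match a, b with
  | None, _ => b
  | _, None => a
  | Some x, Some y => Some (Z.max x y)
  end.
Definition zmax_mul (a b : Zmax) : Zmax :=
  match a, b with
  | Some x, Some y => Some (x + y)%Z
  | _, _ => None
  end.
Definition zmax_zero : Zmax := None.
Definition zmax_one : Zmax := Some 0%Z.

Definition semialgebra_structure (D : Semiring) (phi : Zmax -> D) : Prop :=
  phi zmax_zero = szero D /\
  phi zmax_one = sone D /\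
  (forall a b, phi (zmax_add a b) = sadd D (phi a) (phi b)) /\
  (forall a b, phi (zmax_mul a b) = smul D (phi a) (phi b)) /\
  (forall a b, phi a = phi b -> a = b) /\
  (forall a (d : D), smul D (phi a) d = smul D d (phi a)).

(* Finite unit index: D^x / K^x is finite, where K^x = phi(Z_max \ {0}).
   The quotient is finite iff finitely many cosets x K^x cover D^x. *)
Definition finite_unit_index (D : Semiring) (phi : Zmax -> D) : Prop :=
  exists reps : list D,
    (forall r, In r reps -> is_unit D r) /\
    forall x : D, is_unit D x ->
      exists r k, In r reps /\ x = smul D r (phi (Some k)).

(* Structure map of F^(n): u^k |-> u^(n k), 0 |-> 0. *)
Definition Fn_map (n : nat) (a : Zmax) : Zmax :=
  match a with
  | None => None
  | Some k => Some (Z.of_nat n * k)%Z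
  end.

Definition iso_to_Fn (D : Semiring) (phi : Zmax -> D) (n : nat) : Prop :=
  exists psi : D -> Zmax,
    (forall x y, psi x = psi y -> x = y) /\
    (forall z, exists x, psi x = z) /\
    psi (szero D) = zmax_zero /\
    psi (sone D) = zmax_one /\
    (forall x y, psi (sadd D x y) = zmax_add (psi x) (psi y)) /\
    (forall x y, psi (smul D x y) = zmax_mul (psi x) (psi y)) /\
    (forall a, psi (phi a) = Fn_map n a).

(* Main.v *)
Require Import Defs.
From Stdlib Require Import ZArith List Lia Classical ClassicalEpsilon.

Section S.
Variable D : Semiring.
Variable phi : Zmax -> D.
Hypothesis Hdiv : division_semiring D.
Hypothesis Hphi : semialgebra_structure D phi.

Local Infix "⊕" := (sadd D) (at level 50, left associativity).
Local Infix "⊗" := (smul D) (at level 40, left associativity).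
Local Notation "0" := (szero D).
Local Notation "1" := (sone D).
Definition U (k : Z) : D := phi (Some k).

Lemma phi0 : phi None = 0. Proof. destruct Hphi as [H _]; exact H. Qed.
Lemma U0 : U 0 = 1. Proof. destruct Hphi as [_ [H _]]; exact H. Qed.
Lemma phi_add a b : phi (zmax_add a b) = phi a ⊕ phi b.
Proof. destruct Hphi as [_ [_ [H _]]]; apply H. Qed.
Lemma phi_mul a b : phi (zmax_mul a b) = phi a ⊗ phi b.
Proof. destruct Hphi as [_ [_ [_ [H _]]]]; apply H. Qed.
Lemma phi_inj a b : phi a = phi b -> a = b.
Proof. destruct Hphi as [_ [_ [_ [_ [H _]]]]]; apply H. Qed.
Lemma phi_central a d : phi a ⊗ d = d ⊗ phi a.
Proof. destruct Hphi as [_ [_ [_ [_ [_ H]]]]]; apply H. Qed.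

Lemma Uadd a b : U (a + b) = U a ⊗ U b.
Proof. unfold U. rewrite <- phi_mul. reflexivity. Qed.
Lemma Umax a b : U (Z.max a b) = U a ⊕ U b.
Proof. unfold U. rewrite <- phi_add. reflexivity. Qed.
Lemma Uinj a b : U a = U b -> a = b.
Proof. unfold U; intro H. apply phi_inj in H. congruence. Qed.
Lemma Ucentral a d : U a ⊗ d = d ⊗ U a.
Proof. apply phi_central. Qed.

Lemma one_neq_zero : 1 <> 0.
Proof. rewrite <- U0, <- phi0. intro H. apply phi_inj in H. discriminate. Qed.

Lemma add_0r x : x ⊕ 0 = x.
Proof. rewrite sadd_comm. apply sadd_0l. Qed.

Lemma add_idem x : x ⊕ x = x.
Proof.
  assert (H : 1 ⊕ 1 = 1). { rewrite <- U0, <- Umax. reflexivity. }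
  rewrite <- (smul_1r D x), <- smul_addr, H. reflexivity.
Qed.

Definition le (a b : D) := a ⊕ b = b.

Lemma le_refl a : le a a. Proof. apply add_idem. Qed.
Lemma le_trans a b c : le a b -> le b c -> le a c.
Proof. unfold le; intros H1 H2. rewrite <- H2, sadd_assoc, H1. reflexivity. Qed.
Lemma le_antisym a b : le a b -> le b a -> a = b.
Proof. unfold le; intros H1 H2. rewrite <- H1, <- H2 at 1. apply sadd_comm. Qed.
Lemma le_addl a b : le a (a ⊕ b).
Proof. unfold le. rewrite sadd_assoc, add_idem. reflexivity. Qed.
Lemma le_addr a b : le b (a ⊕ b).
Proof. rewrite sadd_comm. apply le_addl. Qed.
Lemma le_join a b c : le a c -> le b c -> le (a ⊕ b) c.
Proof. unfold le; intros H1 H2. rewrite <- sadd_assoc, H2, H1. reflexivity. Qed.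
Lemma le_add_mono a b c : le a b -> le (a ⊕ c) (b ⊕ c).
Proof. intro H. apply le_join. eapply le_trans. exact H. apply le_addl. apply le_addr. Qed.
Lemma le_mull a b c : le a b -> le (c ⊗ a) (c ⊗ b).
Proof. unfold le; intro H. rewrite <- smul_addr, H. reflexivity. Qed.
Lemma le_mulr a b c : le a b -> le (a ⊗ c) (b ⊗ c).
Proof. unfold le; intro H. rewrite <- smul_addl, H. reflexivity. Qed.
Lemma le0 a : le 0 a. Proof. apply sadd_0l. Qed.
Lemma le_U a b : le (U a) (U b) <-> (a <= b)%Z.
Proof.
  unfold le. rewrite <- Umax. split; intro H.
  - apply Uinj in H. lia.
  - f_equal. lia.
Qed.

Lemma mul0r_phi x : 0 ⊗ x = x ⊗ 0.
Proof. rewrite <- phi0. apply phi_central. Qed.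

Lemma mul0l_unit x : is_unit D x -> x ⊗ 0 = 0.
Proof.
  intros [y [Hxy Hyx]].
  assert (H : le (x ⊗ 0) (x ⊗ (y ⊗ 0))) by (apply le_mull, le0).
  rewrite smul_assoc, Hxy, smul_1l in H.
  unfold le in H. rewrite add_0r in H. exact H.
Qed.

Lemma mulr0 x : x ⊗ 0 = 0.
Proof.
  destruct (classic (x = 0)) as [->|Hx].
  - rewrite <- phi0, <- phi_mul. reflexivity.
  - apply mul0l_unit, Hdiv, Hx.
Qed.
Lemma mul0l x : 0 ⊗ x = 0.
Proof. rewrite mul0r_phi. apply mulr0. Qed.

Lemma unit_nz x : is_unit D x -> x <> 0.
Proof. intros [y [H _]] ->. rewrite mul0l in H. apply one_neq_zero; auto. Qed.

Lemma unit_mul x y : is_unit D x -> is_unit D y -> is_unit D (x ⊗ y).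
Proof.
  intros [x' [H1 H2]] [y' [H3 H4]]. exists (y' ⊗ x'). split.
  - rewrite <- smul_assoc, (smul_assoc D y), H3, smul_1l. exact H1.
  - rewrite <- smul_assoc, (smul_assoc D x'), H2, smul_1l. exact H4.
Qed.

Lemma cancel_l x a b : is_unit D x -> x ⊗ a = x ⊗ b -> a = b.
Proof.
  intros [y [_ H]] E. rewrite <- (smul_1l D a), <- (smul_1l D b), <- H,
    <- !smul_assoc, E. reflexivity.
Qed.

Lemma le_cancel_l x a b : is_unit D x -> le (x ⊗ a) (x ⊗ b) -> le a b.
Proof.
  intros [y [_ H]] E. apply (le_mull _ _ y) in E.
  rewrite !smul_assoc, H, !smul_1l in E. exact E.
Qed.

Lemma U_unit k : is_unit D (U k).
Proof. exists (U (-k)). rewrite <- !Uadd, <- U0. split; f_equal; lia. Qed.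


Fixpoint pw (x : D) (n : nat) : D :=
  match n with O => 1 | S n => pw x n ⊗ x end.

Lemma pw_add x a b : pw x (a + b) = pw x a ⊗ pw x b.
Proof.
  induction b as [|b IH]; simpl.
  - rewrite Nat.add_0_r, smul_1r. reflexivity.
  - rewrite Nat.add_succ_r. simpl. rewrite IH, smul_assoc. reflexivity.
Qed.

Lemma pw_unit x n : is_unit D x -> is_unit D (pw x n).
Proof.
  intro H. induction n; simpl.
  - exists 1. rewrite smul_1l. auto.
  - apply unit_mul; auto.
Qed.

Lemma map_seq_NoDup (g : nat -> D) s n :
  (forall i j, s <= i -> i < j -> j < s + n -> g i <> g j) ->
  NoDup (map g (seq s n)).
Proof.
  revert s. induction n as [|n IH]; intros s H; simpl.
  - constructor.
  - constructor.
    + intro Hin. apply in_map_iff in Hin. destruct Hin as [j [Hj Hin]].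
      apply in_seq in Hin. apply (H s j); try lia. auto.
    + apply IH. intros i j H1 H2 H3. apply H; lia.
Qed.

Lemma pigeon (l : list D) (g : nat -> D) :
  (forall i, In (g i) l) -> exists i j, i < j /\ j <= length l /\ g i = g j.
Proof.
  intro Hin. apply NNPP. intro Hno.
  assert (ND : NoDup (map g (seq 0 (S (length l))))).
  { apply map_seq_NoDup. intros i j _ Hij Hj E. apply Hno. exists i, j.
    repeat split; auto; lia. }
  assert (Hincl : incl (map g (seq 0 (S (length l)))) l).
  { intros a Ha. apply in_map_iff in Ha. destruct Ha as [i [<- _]]. auto. }
  pose proof (NoDup_incl_length ND Hincl) as HL.
  rewrite length_map, length_seq in HL. lia.
Qed.

Hypothesis Hfin : finite_unit_index D phi.

Lemma power_in_K x : is_unit D x -> exists m k, pw x (S m) = U k.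
Proof.
  intro Hx. destruct Hfin as [reps [_ Hreps]].
  set (P := fun i r => In r reps /\ exists k, pw x i = r ⊗ U k).
  set (g := fun i => epsilon (inhabits 1) (P i)).
  assert (Hg : forall i, P i (g i)).
  { intro i. apply epsilon_spec. destruct (Hreps (pw x i) (pw_unit x i Hx))
      as [r [k [H1 H2]]]. exists r. split; eauto. }
  destruct (pigeon reps g (fun i => proj1 (Hg i))) as [i [j [Hij [_ E]]]].
  destruct (proj2 (Hg i)) as [a Ha]. destruct (proj2 (Hg j)) as [b Hb].
  rewrite <- E in Hb.
  exists (j - i - 1), (b - a)%Z.
  apply (cancel_l (pw x i)). apply pw_unit; auto.
  rewrite <- pw_add. replace (i + S (j - i - 1)) with j by lia.
  rewrite Hb, Ha, <- smul_assoc, <- Uadd. f_equal. f_equal. lia.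
Qed.

Fixpoint q (x : D) (n : nat) : D :=
  match n with O => 1 | S n => 1 ⊕ q x n ⊗ x end.

Lemma q_S x n : q x (S n) = q x n ⊕ pw x (S n).
Proof.
  induction n as [|n IH].
  - simpl. rewrite !smul_1l. reflexivity.
  - change (1 ⊕ q x (S n) ⊗ x = q x (S n) ⊕ pw x (S n) ⊗ x).
    rewrite IH at 1. rewrite smul_addl, sadd_assoc. reflexivity.
Qed.

Lemma one_le_q x n : le 1 (q x n).
Proof. destruct n; simpl. apply le_refl. apply le_addl. Qed.

Lemma pw_le_q x n : le (pw x n) (q x n).
Proof. destruct n. apply le_refl. rewrite q_S. apply le_addr. Qed.

Lemma nz_of_ge1 s : le 1 s -> s <> 0.
Proof. intros H ->. unfold le in H. rewrite add_0r in H. apply one_neq_zero; auto. Qed.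

Lemma comparable1 x : is_unit D x -> le x 1 \/ le 1 x.
Proof.
  intro Hx. destruct (power_in_K x Hx) as [n [k Hk]].
  set (s := q x n).
  assert (E : 1 ⊕ s ⊗ x = s ⊕ U k). { rewrite <- Hk. apply (q_S x n). }
  assert (Hs : is_unit D s). { apply Hdiv, nz_of_ge1, one_le_q. }
  assert (Hsx : le (U k) (s ⊗ x)). { rewrite <- Hk. simpl. apply le_mulr, pw_le_q. }
  destruct (Z_le_gt_dec 0 k) as [Hk0|Hk0].
  - right. apply (le_cancel_l s); auto. rewrite smul_1r.
    apply le_trans with (s ⊕ U k). apply le_addl. rewrite <- E.
    apply le_trans with (U k ⊕ s ⊗ x). apply le_add_mono. rewrite <- U0. apply le_U; lia.
    rewrite Hsx. apply le_refl.
  - left. apply (le_cancel_l s); auto. rewrite smul_1r.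
    apply le_trans with (1 ⊕ s ⊗ x). apply le_addr. rewrite E.
    apply le_trans with (s ⊕ 1). rewrite (sadd_comm D s), (sadd_comm D s).
    apply le_add_mono. rewrite <- U0. apply le_U; lia.
    rewrite sadd_comm. pose proof (one_le_q x n) as H1. fold s in H1.
    unfold le in H1 |- *. rewrite H1. apply add_idem.
Qed.

Lemma total a b : le a b \/ le b a.
Proof.
  destruct (classic (a = 0)) as [->|Ha]. left; apply le0.
  destruct (classic (b = 0)) as [->|Hb]. right; apply le0.
  destruct (Hdiv a Ha) as [a' [H1 H2]].
  assert (Hu : is_unit D (a' ⊗ b)). { apply unit_mul. exists a; auto. apply Hdiv; auto. }
  destruct (comparable1 _ Hu) as [H|H]; [right|left];
  apply (le_mull _ _ a) in H; rewrite smul_assoc, H1, smul_1l, smul_1r in H; exact H.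
Qed.


Section W.
Variables g gi : D.
Hypothesis Hg1 : g ⊗ gi = 1.
Hypothesis Hg2 : gi ⊗ g = 1.

Definition W (j : Z) : D := pw g (Z.to_nat j) ⊗ pw gi (Z.to_nat (- j)).

Lemma W0 : W 0 = 1.
Proof. unfold W. simpl. apply smul_1l. Qed.

Lemma W_succ j : W (j + 1) = W j ⊗ g.
Proof.
  unfold W. destruct (Z_le_gt_dec 0 j).
  - replace (Z.to_nat (j+1)) with (S (Z.to_nat j)) by lia.
    replace (Z.to_nat (-(j+1))) with O by lia.
    replace (Z.to_nat (-j)) with O by lia. simpl. rewrite !smul_1r. reflexivity.
  - replace (Z.to_nat (j+1)) with O by lia.
    replace (Z.to_nat j) with O by lia.
    replace (Z.to_nat (-j)) with (S (Z.to_nat (-(j+1)))) by lia. simpl.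
    rewrite <- !smul_assoc, Hg2, smul_1r. reflexivity.
Qed.

Lemma W_pred j : W (j - 1) = W j ⊗ gi.
Proof.
  replace j with ((j - 1) + 1)%Z at 2 by lia. rewrite W_succ, <- smul_assoc, Hg1, smul_1r.
  reflexivity.
Qed.

Lemma W_add i j : W (i + j) = W i ⊗ W j.
Proof.
  induction j using Z.peano_ind.
  - rewrite Z.add_0_r, W0, smul_1r. reflexivity.
  - rewrite <- Z.add_1_r, Z.add_assoc, !W_succ, IHj, smul_assoc. reflexivity.
  - rewrite <- Z.sub_1_r, Z.add_sub_assoc, !W_pred, IHj, smul_assoc. reflexivity.
Qed.

Lemma W1 : W 1 = g.
Proof. change 1%Z with (0 + 1)%Z. rewrite W_succ, W0, smul_1l. reflexivity. Qed.

Lemma W_unit j : is_unit D (W j).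
Proof. exists (W (- j)). rewrite <- !W_add, <- W0. split; f_equal; lia. Qed.

Hypothesis Hge : le 1 g.
Hypothesis Hne : g <> 1.

Lemma W_ge1 n : le 1 (W (Z.of_nat n)).
Proof.
  induction n. change (Z.of_nat 0) with 0%Z. rewrite W0. apply le_refl.
  rewrite Nat2Z.inj_succ, <- Z.add_1_r, W_succ.
  apply le_trans with (W (Z.of_nat n)); auto.
  rewrite <- (smul_1r D (W (Z.of_nat n))) at 1. apply le_mull; auto.
Qed.

Lemma W_mono i j : (i <= j)%Z -> le (W i) (W j).
Proof.
  intro H. replace j with (i + Z.of_nat (Z.to_nat (j - i)))%Z by lia.
  rewrite W_add. rewrite <- (smul_1r D (W i)) at 1. apply le_mull, W_ge1.
Qed.

Lemma W_inj i j : W i = W j -> i = j.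
Proof.
  intro E. destruct (Z.lt_trichotomy i j) as [H|[H|H]]; auto; exfalso; apply Hne.
  - apply le_antisym; auto. assert (E2 : W (j - i) = 1).
    { apply (cancel_l (W i)). apply W_unit. rewrite <- W_add, smul_1r.
      replace (i + (j - i))%Z with j by lia. auto. }
    rewrite <- E2, <- W1. apply W_mono. lia.
  - apply le_antisym; auto. assert (E2 : W (i - j) = 1).
    { apply (cancel_l (W j)). apply W_unit. rewrite <- W_add, smul_1r.
      replace (j + (i - j))%Z with i by lia. auto. }
    rewrite <- E2, <- W1. apply W_mono. lia.
Qed.

Lemma W_max i j : W i ⊕ W j = W (Z.max i j).
Proof.
  destruct (Z.le_ge_cases i j) as [H|H].
  - rewrite Z.max_r by auto. apply W_mono, H.
  - rewrite Z.max_l by auto. rewrite sadd_comm. apply W_mono, H.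
Qed.

Lemma iso_final (n0 : Z) :
  (0 < n0)%Z ->
  (forall x, x <> 0 -> exists j, x = W j) ->
  (forall k, U k = W (n0 * k)) ->
  iso_to_Fn D phi (Z.to_nat n0).
Proof.
  intros Hn0 Honto HU.
  set (psi := fun x => if excluded_middle_informative (x = 0) then None
                       else Some (epsilon (inhabits 0%Z) (fun j => x = W j))).
  assert (psi0 : psi 0 = None).
  { unfold psi. destruct (excluded_middle_informative _); congruence. }
  assert (psiW : forall j, psi (W j) = Some j).
  { intro j. unfold psi. destruct (excluded_middle_informative _) as [H|H].
    - exfalso. exact (unit_nz _ (W_unit j) H).
    - f_equal. symmetry. apply W_inj. apply (epsilon_spec (inhabits 0%Z) (fun i => W j = W i)).
      eauto. }
  assert (cases : forall x, x = 0 \/ exists j, x = W j).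
  { intro x. destruct (classic (x = 0)); auto. }
  exists psi. split; [|split; [|split; [|split; [|split; [|split]]]]].
  - intros x y E. destruct (cases x) as [->|[i ->]]; destruct (cases y) as [->|[j ->]];
      rewrite ?psi0, ?psiW in E; try discriminate; auto. injection E as ->. auto.
  - intros [j|]. exists (W j). auto. exists 0. auto.
  - auto.
  - rewrite <- W0. apply psiW.
  - intros x y. destruct (cases x) as [->|[i ->]]; destruct (cases y) as [->|[j ->]].
    + rewrite sadd_0l, psi0. reflexivity.
    + rewrite sadd_0l, psi0. reflexivity.
    + rewrite add_0r, psi0. simpl. destruct (psi (W i)); reflexivity.
    + rewrite W_max, !psiW. reflexivity.
  - intros x y. destruct (cases x) as [->|[i ->]]; destruct (cases y) as [->|[j ->]].
    + rewrite mul0l, psi0. reflexivity.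
    + rewrite mul0l, psi0. reflexivity.
    + rewrite mulr0, psi0, psiW. reflexivity.
    + rewrite <- W_add, !psiW. reflexivity.
  - intros [k|].
    + change (phi (Some k)) with (U k). rewrite HU, psiW. simpl.
      rewrite Z2Nat.id by lia. reflexivity.
    + rewrite phi0, psi0. reflexivity.
Qed.

End W.


Lemma min_exists (R : D -> D -> Prop) (l : list D) : forall (P : D -> Prop),
  (forall x, P x -> exists r, In r l /\ R x r) ->
  (forall x y r, P x -> P y -> R x r -> R y r -> x = y) ->
  (exists x, P x) -> exists g, P g /\ forall t, P t -> le g t.
Proof.
  induction l as [|a l IH]; intros P H1 H2 [x0 Hx0].
  - destruct (H1 x0 Hx0) as [r [[] _]].
  - set (P' := fun x => P x /\ ~ R x a).
    assert (IH' : (exists x, P' x) -> exists g, P' g /\ forall t, P' t -> le g t).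
    { apply IH.
      - intros x [Px Nx]. destruct (H1 x Px) as [r [[<-|Hr] Rr]]; [contradiction|eauto].
      - intros x y r [Px _] [Py _]. apply H2; auto. }
    destruct (classic (exists x, P x /\ R x a)) as [[xa [Pxa Rxa]]|Hno].
    + destruct (classic (exists x, P' x)) as [Hne|Hne].
      * destruct (IH' Hne) as [g' [[Pg' Ng'] Hg']].
        destruct (total g' xa) as [Hle|Hle].
        -- exists g'. split; auto. intros t Pt. destruct (classic (R t a)) as [Rt|Rt].
           ++ rewrite (H2 t xa a); auto.
           ++ apply Hg'. split; auto.
        -- exists xa. split; auto. intros t Pt. destruct (classic (R t a)) as [Rt|Rt].
           ++ rewrite (H2 t xa a); auto. apply le_refl.
           ++ apply le_trans with g'; auto. apply Hg'. split; auto.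
      * exists xa. split; auto. intros t Pt. destruct (classic (R t a)) as [Rt|Rt].
        -- rewrite (H2 t xa a); auto. apply le_refl.
        -- exfalso. apply Hne. exists t. split; auto.
    + destruct IH' as [g [[Pg _] Hg]].
      { exists x0. split; auto. intro R0. apply Hno. eauto. }
      exists g. split; auto. intros t Pt. apply Hg. split; auto. intro Rt. apply Hno. eauto.
Qed.

Lemma discrete_step (P : Z -> Prop) j0 j1 :
  (j0 < j1)%Z -> P j0 -> ~ P j1 -> exists j, P j /\ ~ P (j + 1)%Z.
Proof.
  intros Hlt. replace j1 with (j0 + Z.of_nat (Z.to_nat (j1 - j0)))%Z by lia.
  generalize (Z.to_nat (j1 - j0)). clear. intro n. revert j0.
  induction n as [|n IH]; intros j0 H0 H1.
  - rewrite Z.add_0_r in H1. contradiction.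
  - destruct (classic (P (j0 + 1)%Z)) as [H|H].
    + apply (IH (j0 + 1)%Z H). replace (j0 + 1 + Z.of_nat n)%Z with (j0 + Z.of_nat (S n))%Z by lia.
      auto.
    + eauto.
Qed.

Lemma pw_ge1 x n : le 1 x -> le 1 (pw x n).
Proof.
  intro H. induction n; simpl. apply le_refl.
  apply le_trans with (pw x n); auto. rewrite <- (smul_1r D (pw x n)) at 1. apply le_mull; auto.
Qed.

Lemma pw_le1 x n : le x 1 -> le (pw x n) 1.
Proof.
  intro H. induction n; simpl. apply le_refl.
  apply le_trans with (pw x n); auto. rewrite <- (smul_1r D (pw x n)) at 2. apply le_mull; auto.
Qed.

Lemma unit_bounds x : is_unit D x -> exists c, (0 <= c)%Z /\ le (U (- c)) x /\ le x (U c).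
Proof.
  intro Hx. destruct (power_in_K x Hx) as [m [k Hk]]. simpl in Hk.
  destruct (comparable1 x Hx) as [H|H].
  - assert (A : le (U k) x). { rewrite <- Hk. apply le_trans with (1 ⊗ x); [apply le_mulr, pw_le1; auto | rewrite smul_1l; apply le_refl]. }
    assert (Hk0 : (k <= 0)%Z). { apply le_U. rewrite U0. eapply le_trans; eauto. }
    exists (- k)%Z. split. lia. split. rewrite Z.opp_involutive. auto.
    eapply le_trans. exact H. rewrite <- U0. apply le_U. lia.
  - assert (A : le x (U k)). { rewrite <- Hk. apply le_trans with (1 ⊗ x); [rewrite smul_1l; apply le_refl | apply le_mulr, pw_ge1; auto]. }
    assert (Hk0 : (0 <= k)%Z). { apply le_U. rewrite U0. eapply le_trans; eauto. }
    exists k. split. lia. split; auto.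
    eapply le_trans; [|exact H]. rewrite <- U0. apply le_U. lia.
Qed.

Lemma W_nat g gi n : W g gi (Z.of_nat n) = pw g n.
Proof.
  unfold W. rewrite Nat2Z.id. replace (Z.to_nat (- Z.of_nat n)) with O by lia. simpl.
  apply smul_1r.
Qed.

Lemma main_sec : exists n : nat, (0 < n)%nat /\ iso_to_Fn D phi n.
Proof.
  set (T := fun x => is_unit D x /\ le 1 x /\ x <> 1 /\ le x (U 1)).
  set (R := fun x r => exists k, x = r ⊗ U k).
  assert (T_shift : forall x y c, T x -> T y -> (1 <= c)%Z -> y <> x ⊗ U c).
  { intros x y c [Ux [Hx1 [Hx2 Hx3]]] [Uy [Hy1 [Hy2 Hy3]]] Hc E.
    assert (A : le (U 1) y).
    { rewrite E. apply le_trans with (x ⊗ U 1).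
      rewrite <- (smul_1l D (U 1)) at 1. apply le_mulr; auto.
      apply le_mull, le_U; lia. }
    assert (B : y = U 1) by (apply le_antisym; auto).
    apply Hx2. apply (cancel_l (U 1)). apply U_unit. rewrite smul_1r, Ucentral.
    apply le_antisym.
    - rewrite B in E. rewrite E at 2. apply le_mull, le_U; lia.
    - rewrite <- (smul_1l D (U 1)) at 1. apply le_mulr; auto. }
  destruct Hfin as [reps [_ Hreps]].
  destruct (min_exists R reps T) as [g [Tg Hmin]].
  { intros x [Ux _]. destruct (Hreps x Ux) as [r [k [H1 H2]]]. exists r. split; auto.
    exists k; auto. }
  { intros x y r Tx Ty [a Ha] [b Hb].
    destruct (Z.lt_trichotomy a b) as [H|[H|H]].
    - exfalso. apply (T_shift x y (b - a)%Z Tx Ty). lia.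
      rewrite Hb, Ha, <- smul_assoc, <- Uadd. f_equal. f_equal. lia.
    - subst. congruence.
    - exfalso. apply (T_shift y x (a - b)%Z Ty Tx). lia.
      rewrite Hb, Ha, <- smul_assoc, <- Uadd. f_equal. f_equal. lia. }
  { exists (U 1). split. apply U_unit. split. rewrite <- U0. apply le_U; lia.
    split. rewrite <- U0. intro E. apply Uinj in E. lia. apply le_refl. }
  destruct Tg as [[gi [Hg1 Hg2]] [Hge [Hne Hgu]]].
  pose proof (W_add g gi Hg1 Hg2) as WA. pose proof (W_mono g gi Hg1 Hg2 Hge) as WM.
  pose proof (W_inj g gi Hg1 Hg2 Hge Hne) as WI. pose proof (W_unit g gi Hg1 Hg2) as WU.
  pose proof (W1 g gi Hg2) as W1'. pose proof (W0 g gi) as W0'.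
  destruct (power_in_K g (ex_intro _ gi (conj Hg1 Hg2))) as [m [k' Hk']].
  set (M := Z.of_nat (S m)).
  assert (HM : (W g gi) M = U k'). { unfold M. rewrite W_nat. auto. }
  assert (HM0 : (0 < M)%Z) by (unfold M; lia).
  assert (Hk'0 : (0 < k')%Z).
  { assert (A : le (U 0) (U k')). { rewrite <- HM, U0, <- W0'. apply WM; auto; lia. }
    apply le_U in A. destruct (Z.eq_dec k' 0) as [E|E]; [|lia].
    subst. exfalso. rewrite U0, <- W0' in HM. apply WI in HM; auto. lia. }
  assert (HMc : forall c, (W g gi) (M * c)%Z = U (k' * c)%Z).
  { intro c. induction c using Z.peano_ind.
    - rewrite !Z.mul_0_r. rewrite W0, U0. auto.
    - rewrite <- Z.add_1_r, !Z.mul_add_distr_l, !Z.mul_1_r.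
      rewrite WA, Uadd. rewrite IHc, HM. auto.
    - rewrite <- Z.sub_1_r, !Z.mul_sub_distr_l, !Z.mul_1_r.
      apply (cancel_l (U k')). apply U_unit. rewrite <- Uadd, Ucentral, <- HM.
      rewrite <- WA. replace (k' + (k' * c - k'))%Z with (k' * c)%Z by lia.
      replace (M * c - M + M)%Z with (M * c)%Z by lia. exact IHc. }
  assert (Honto : forall x, x <> 0 -> exists j, x = (W g gi) j).
  { intros x Hx0. pose proof (Hdiv x Hx0) as Ux.
    destruct (unit_bounds x Ux) as [c [Hc0 [Hlo Hhi]]].
    destruct (discrete_step (fun j => le ((W g gi) j) x) (- (M * c))%Z (M * c + 1)%Z) as [j [Pj NPj]].
    - nia.
    - replace (- (M * c))%Z with (M * - c)%Z by lia. rewrite HMc.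
      eapply le_trans; [|exact Hlo]. apply le_U. nia.
    - intro P1. apply Hne. assert (A : le ((W g gi) (M * c + 1)%Z) ((W g gi) (M * c)%Z)).
      { eapply le_trans. exact P1. eapply le_trans. exact Hhi. rewrite HMc. apply le_U. nia. }
      assert (B : (W g gi) (M * c + 1)%Z = (W g gi) (M * c)%Z).
      { apply le_antisym; auto. apply WM; auto. lia. }
      apply WI in B; auto. lia.
    - assert (Hx1 : le x ((W g gi) (j + 1)%Z) /\ x <> (W g gi) (j + 1)%Z).
      { destruct (total x ((W g gi) (j + 1)%Z)) as [H|H]. split; auto. intros ->. apply NPj, le_refl.
        contradiction. }
      destruct Hx1 as [Hx1 Hx2].
      set (y := (W g gi) (- j)%Z ⊗ x).
      assert (Ey : x = (W g gi) j ⊗ y).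
      { unfold y. rewrite smul_assoc, <- WA, Z.add_opp_diag_r, W0, smul_1l; auto. }
      assert (Hy1 : le 1 y).
      { unfold y. apply (le_cancel_l ((W g gi) j)). apply WU; auto.
        rewrite smul_1r, smul_assoc. rewrite <- WA, Z.add_opp_diag_r, W0, smul_1l; auto. }
      assert (Hyg : le y g).
      { apply (le_cancel_l ((W g gi) j)). apply WU; auto. rewrite <- Ey.
        replace (W g gi j ⊗ g) with (W g gi (j+1)%Z). exact Hx1. rewrite WA, W1'. reflexivity. }
      assert (Hyne : y <> g).
      { intro E. apply Hx2. rewrite Ey, E. rewrite WA, W1'. reflexivity. }
      destruct (classic (y = 1)) as [E|E].
      + exists j. rewrite Ey, E, smul_1r. auto.
      + exfalso. apply Hyne. apply le_antisym; auto. apply Hmin.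
        split. unfold y. apply unit_mul; auto.
        split; auto. split; auto. eapply le_trans; eauto. }
  destruct (Honto (U 1) (unit_nz _ (U_unit 1))) as [n0 Hn0].
  assert (Hn0p : (0 < n0)%Z).
  { destruct (Z_lt_le_dec 0 n0) as [H|H]; auto. exfalso.
    assert (A : le (U 1) (U 0)). { rewrite Hn0, U0. rewrite <- W0'. apply WM; auto. }
    apply le_U in A. lia. }
  exists (Z.to_nat n0). split. lia.
  apply (iso_final g gi); auto.
  induction k using Z.peano_ind.
  - rewrite Z.mul_0_r, U0, W0. auto.
  - rewrite <- Z.add_1_r, Z.mul_add_distr_l, Z.mul_1_r, WA, Uadd, IHk, Hn0; auto.
  - apply (cancel_l (U 1)). apply U_unit. rewrite <- Uadd.
    replace (1 + Z.pred k)%Z with k by lia. rewrite IHk, Hn0, <- WA.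
    f_equal. lia.
Qed.

End S.

Theorem mainTheorem18 (D : Semiring) (phi : Zmax -> D) :
  division_semiring D ->
  semialgebra_structure D phi ->
  finite_unit_index D phi ->
  exists n : nat, (0 < n)%nat /\ iso_to_Fn D phi n.
Proof.
  intros Hdiv Hphi Hfin. exact (main_sec D phi Hdiv Hphi Hfin).
Qed.
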